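(* Let $G=(V,E)$ be a $2$-vertex-twinless-connected directed graph. Consider the following algorithm. (1) Compute a minimal $2$-vertex-connected spanning subgraph $G_{2v}=(V,E_{2v})$ of $G$ (i.e. $E_{2v}\subseteq E$, $(V,E_{2v})$ is $2$-vertex-connected, and removing any edge of $E_{2v}$ destroys $2$-vertex-connectivity). (2) Set $E_{2t}\leftarrow E_{2v}$ and $G_{2t}=(V,E_{2t})$. (3) Compute the twinless articulation points of $G_{2v}$. (4) For each twinless articulation point $x$ of $G_{2v}$: while $G_{2t}\setminus\{x\}$ (the graph obtained from the current $G_{2t}$ by deleting $x$) is not twinless strongly connected, compute the twinless strongly connected components of $G_{2t}\setminus\{x\}$, find an edge $(v,w)\in E\setminus E_{2t}$ such that $v,w$ lie in distinct twinless strongly connected components of $G_{2t}\setminus\{x\}$, and add $(v,w)$ to $E_{2t}$. Then the output graph $G_{2t}=(V,E_{2t})$ is $2$-vertex-twinless-connected.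
   Context: Directed graphs are finite. A directed graph is strongly connected if for all vertices $u,w$ there is a directed path from $u$ to $w$. A vertex of a strongly connected graph is a strong articulation point if its deletion leaves a graph that is not strongly connected. A directed graph is $2$-vertex-connected if it is strongly connected, has at least $3$ vertices and has no strong articulation points. Vertices $a,b$ are twinless strongly connected if there exist a directed path $p$ from $a$ to $b$ and a directed path $q$ from $b$ to $a$ such that for every edge $(x,y)$ of $p$, the edge $(y,x)$ is not in $q$; this is an equivalence relation whose classes are the twinless strongly connected components. A graph is twinless strongly connected if it has exactly one twinless strongly connected component. A vertex $v$ of a twinless strongly connected graph $H$ is a twinless articulation point if $H$ minus $v$ is not twinless strongly connected. A directed graph $H=(V,F)$ is $2$-vertex-twinless-connected if it is twinless strongly connected, $|V|\geq 3$, and it has no twinless articulation points. *)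

(* Defs.v *)
(* A directed graph is a pair (V, E) with V : {set T} for a
   finType T and E : {set T * T}; an edge (x,y) is usable only when both
   endpoints lie in V (so deleting a vertex x is just V :\ x). *)
From mathcomp Require Import all_boot.
Set Implicit Arguments. Unset Strict Implicit. Unset Printing Implicit Defensive.

Section Digraph.
Variable T : finType.
Implicit Types (V : {set T}) (E F : {set T * T}).

Definition adj V E : rel T := fun x y => [&& x \in V, y \in V & (x, y) \in E].

Definition is_dpath V E (a b : T) (p : seq T) : Prop :=
  a \in V /\ path (adj V E) a p /\ last a p = b.

Definition dpath_edges (a : T) (p : seq T) : seq (T * T) := zip (a :: p) p.

Definition strongly_connected V E : Prop :=
  forall u w, u \in V -> w \in V -> exists p, is_dpath V E u w p.

Definition strong_articulation_point V E (v : T) : Prop :=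
  v \in V /\ ~ strongly_connected (V :\ v) E.

Definition two_vertex_connected V E : Prop :=
  [/\ strongly_connected V E, 3 <= #|V| &
      forall v, ~ strong_articulation_point V E v].

Definition twinless_rel V E (a b : T) : Prop :=
  exists p q, [/\ is_dpath V E a b p, is_dpath V E b a q &
    forall e, e \in dpath_edges a p -> (e.2, e.1) \notin dpath_edges b q].

(* exactly one twinless strongly connected component (an equivalence class of
   twinless_rel on V): V is nonempty and all its vertices are related. *)
Definition twinless_strongly_connected V E : Prop :=
  (exists a, a \in V) /\ forall a b, a \in V -> b \in V -> twinless_rel V E a b.

Definition twinless_articulation_point V E (v : T) : Prop :=
  v \in V /\ ~ twinless_strongly_connected (V :\ v) E.

Definition two_vertex_twinless_connected V E : Prop :=
  [/\ twinless_strongly_connected V E, 3 <= #|V| &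
      forall v, ~ twinless_articulation_point V E v].

Definition minimal_2vc_spanning V E (E2v : {set T * T}) : Prop :=
  [/\ E2v \subset E, two_vertex_connected V E2v &
      forall e, e \in E2v -> ~ two_vertex_connected V (E2v :\ e)].

(* step (4), inner while loop for a fixed twinless articulation point x:
   while_loop V E x F F' means that the loop started with current edge set F
   can terminate with edge set F' (choices of edges are nondeterministic). *)
Inductive while_loop V E (x : T) : {set T * T} -> {set T * T} -> Prop :=
| wl_done F : twinless_strongly_connected (V :\ x) F -> while_loop V E x F F
| wl_step F v w F' :
    ~ twinless_strongly_connected (V :\ x) F ->
    (v, w) \in E :\: F ->
    v \in V :\ x -> w \in V :\ x ->
    ~ twinless_rel (V :\ x) F v w ->
    while_loop V E x ((v, w) |: F) F' ->
    while_loop V E x F F'.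

Inductive for_loop V E : seq T -> {set T * T} -> {set T * T} -> Prop :=
| fl_nil F : for_loop V E [::] F F
| fl_cons x xs F F1 F2 :
    while_loop V E x F F1 -> for_loop V E xs F1 F2 -> for_loop V E (x :: xs) F F2.

Definition algorithm_run V E (E2t : {set T * T}) : Prop :=
  exists E2v xs,
    [/\ minimal_2vc_spanning V E E2v,
        uniq xs,
        (forall x, x \in xs <-> twinless_articulation_point V E2v x) &
        for_loop V E xs E2v E2t].

End Digraph.

(* Main.v *)
Require Import Defs.
From mathcomp Require Import all_boot.
From Stdlib Require Import Classical.
Set Implicit Arguments. Unset Strict Implicit. Unset Printing Implicit Defensive.

Lemma tr_mono (T : finType) (V V' : {set T}) (E E' : {set T * T}) a b :
  V \subset V' -> E \subset E' -> twinless_rel V E a b -> twinless_rel V' E' a b.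
Proof.
move=> sV sE [p [q [[ha [pp lp]] [hb [pq lq]] H]]].
have sub : subrel (adj V E) (adj V' E').
  move=> x y /and3P [hx hy he]; apply/and3P; split.
  - exact: (subsetP sV).
  - exact: (subsetP sV).
  - exact: (subsetP sE).
exists p, q; split => //.
- split; [exact: (subsetP sV)|split=> //]; exact: sub_path pp.
- split; [exact: (subsetP sV)|split=> //]; exact: sub_path pq.
Qed.

Lemma tsc_mono (T : finType) (V : {set T}) (E E' : {set T * T}) :
  E \subset E' -> twinless_strongly_connected V E -> twinless_strongly_connected V E'.
Proof.
move=> sE [ex H]; split => // a b ha hb; apply: tr_mono (H a b ha hb) => //.
Qed.

Lemma wl_prop (T : finType) (V : {set T}) (E : {set T * T}) x F F' :
  while_loop V E x F F' -> F \subset F' /\ twinless_strongly_connected (V :\ x) F'.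
Proof.
elim => [G h|G v w G' _ _ _ _ _ _ [s h]]; first by split.
split => //; apply: subset_trans s; exact: subsetUr.
Qed.

Lemma fl_prop (T : finType) (V : {set T}) (E : {set T * T}) xs F F' :
  for_loop V E xs F F' -> F \subset F' /\
    forall x, x \in xs -> twinless_strongly_connected (V :\ x) F'.
Proof.
elim => [G|y ys G G1 G2 hw _ [s h]]; first by split.
have [s1 t1] := wl_prop hw.
split; first exact: subset_trans s1 s.
move=> x; rewrite inE => /orP [/eqP ->|hx]; last exact: h.
exact: tsc_mono t1.
Qed.

Theorem mainTheorem3 (T : finType) (E : {set T * T}) :
  two_vertex_twinless_connected [set: T] E ->
  forall E2t : {set T * T}, algorithm_run [set: T] E E2t ->
  two_vertex_twinless_connected [set: T] E2t.
Proof.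
move=> [_ h3 _] E2t [E2v [xs [_ _ hxs hfl]]].
have [s hx] := fl_prop hfl.
have key : forall x, twinless_strongly_connected ([set: T] :\ x) E2t.
  move=> x; case: (boolP (x \in xs)) => xin; first exact: hx.
  apply: NNPP => nt; move/negP: xin; apply; apply/(proj2 (hxs x)); split; first by rewrite inE.
  by move=> t; apply: nt; exact: tsc_mono t.
split => //; last by move=> v [_ nt]; apply: nt.
have h0 : 0 < #|[set: T]| by apply: leq_trans h3.
have [a _] : exists a : T, a \in [set: T].
  by move: h0; rewrite card_gt0 => /set0Pn [a ha]; exists a.
split; first by exists a.
move=> b c _ _.
have : ~~ ([set: T] \subset [set b; c]).
  apply/negP => /subset_leq_card; rewrite cards2.
  by case: (b != c) => /= hh; move: (leq_trans h3 hh).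
case/subsetPn => x _; rewrite !inE negb_or => /andP [xb xc].
have [_ H] := key x.
apply: (@tr_mono T ([set: T] :\ x) [set: T] E2t E2t b c (subsetT _) (subxx _)).
apply: H.
- by rewrite !inE eq_sym xb.
- by rewrite !inE eq_sym xc.
Qed.
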